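(* Let $X$ be a Banach space as described in the context, let $f\in X$ with $f(z)=\sum_{k=0}^\infty c_kz^k$ in $\mathbb{D}$, and assume $\lim_{n\to\infty}\|f-S_n(f)\|=0$, where $S_n(f)(z)=\sum_{k=0}^{n}c_kz^k$ is the $n$-th partial sum of the Taylor series of $f$. Then there exists a sequence $p_n\in\mathcal{P}_n[\mathbb{Z}]$ with $\lim_{n\to\infty}\|f-p_n\|=0$ if and only if all coefficients $c_k$ are integers.
   Context: $\mathbb{D}=\{z\in\mathbb{C}:|z|<1\}$. $X$ is a complex Banach space of functions analytic in $\mathbb{D}$ whose norm $\|\cdot\|$ satisfies: (i) $\|f(\cdot\, e^{it})\|=\|f(\cdot)\|$ for all $t\in\mathbb{R}$ and $f\in X$; (ii) $\|f\|<\infty$ for every entire function $f$; (iii) for all $f\in X$ and $g\in L[0,2\pi]$, $\big\|\frac{1}{2\pi}\int_0^{2\pi} f(ze^{it})g(t)\,dt\big\|\le \frac{1}{2\pi}\int_0^{2\pi}|g(t)|\,dt\cdot\|f\|$. A complex number is called an integer if its real and imaginary parts are integers; $\mathcal{P}_n[\mathbb{Z}]$ is the set of complex polynomials of degree at most $n-1$ with integer coefficients in this sense. *)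

(* Defs.v *)
From HB Require Import structures.
From mathcomp Require Import all_boot all_order all_algebra.
From mathcomp Require Export complex.
From mathcomp Require Export all_classical all_reals all_analysis.
Export Order.TTheory GRing.Theory Num.Theory.
Export numFieldNormedType.Exports.

Set Implicit Arguments.
Unset Strict Implicit.
Unset Printing Implicit Defensive.

Local Open Scope ring_scope.
Local Open Scope complex_scope.
Local Open Scope classical_set_scope.

Section Defs.
Context {R : realType}.
Local Notation C := (R[i]).

Definition unit_disk : set C := [set z | `|z| < 1].

Definition cabs (z : C) : R := complex.Re `|z|.

(* f is complex-differentiable (holomorphic / analytic) at every point of A *)
Definition holomorphic_on (A : set C) (f : C -> C) : Prop :=
  forall z, A z -> derivable (f : C^o -> C^o) z 1.

Definition entire (f : C -> C) : Prop := forall z : C, derivable (f : C^o -> C^o) z 1.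

Definition expi (t : R) : C := (cos t) +i* (sin t).

Definition two_pi : R := pi *+ 2.

Definition I02pi : set R := `[0, two_pi]%classic.

Definition cintegrable (g : R -> C) : Prop :=
  (@lebesgue_measure R).-integrable I02pi (EFin \o (fun t => complex.Re (g t))) /\
  (@lebesgue_measure R).-integrable I02pi (EFin \o (fun t => complex.Im (g t))).

Definition cintegral (h : R -> C) : C :=
  (Rintegral (@lebesgue_measure R) I02pi (fun t => complex.Re (h t))) +i*
  (Rintegral (@lebesgue_measure R) I02pi (fun t => complex.Im (h t))).

(* X (given by its carrier Xs, a set of functions, whose elements are
   considered as functions on the unit disk) with norm N is a complex Banach
   space of functions analytic in D satisfying (i), (ii), (iii). *)
Record admissible_space (Xs : set (C -> C)) (N : (C -> C) -> R) : Prop := {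
  adm_analytic : forall f, Xs f -> holomorphic_on unit_disk f;
  (* elements of X are functions on D: only values on D matter *)
  adm_ext : forall f g, Xs f -> (forall z, unit_disk z -> f z = g z) ->
      Xs g /\ N g = N f;
  adm_zero : Xs (fun _ => 0);
  adm_add : forall f g, Xs f -> Xs g -> Xs (fun z => f z + g z);
  adm_scale : forall (a : C) f, Xs f -> Xs (fun z => a * f z);
  adm_norm_ge0 : forall f, Xs f -> 0 <= N f;
  adm_norm_eq0 : forall f, Xs f -> N f = 0 -> forall z, unit_disk z -> f z = 0;
  adm_normZ : forall (a : C) f, Xs f -> N (fun z => a * f z) = cabs a * N f;
  adm_normD : forall f g, Xs f -> Xs g -> N (fun z => f z + g z) <= N f + N g;
  adm_complete : forall u : nat -> C -> C, (forall n, Xs (u n)) ->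
      (forall e : R, 0 < e -> exists M : nat, forall m n : nat, (M <= m)%N -> (M <= n)%N ->
          N (fun z => u m z - u n z) < e) ->
      exists2 g, Xs g & (fun n => N (fun z => u n z - g z)) @ \oo --> (0 : R);
  adm_rot : forall f (t : R), Xs f ->
      Xs (fun z => f (z * expi t)) /\ N (fun z => f (z * expi t)) = N f;
  adm_entire : forall f, entire f -> Xs f;
  adm_conv : forall f (g : R -> C), Xs f -> cintegrable g ->
      Xs (fun z => (two_pi^-1)%:C * cintegral (fun t => f (z * expi t) * g t)) /\
      N (fun z => (two_pi^-1)%:C * cintegral (fun t => f (z * expi t) * g t))
        <= two_pi^-1 * Rintegral (@lebesgue_measure R) I02pi (fun t => cabs (g t)) * N f
}.

Definition cint (z : C) : Prop := complex.Re z \is a Num.int /\ complex.Im z \is a Num.int.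

(* P_n[Z]: polynomials of degree at most n-1 with integer coefficients *)
Definition PnZ (n : nat) (p : {poly C}) : Prop :=
  (size p <= n)%N /\ forall k : nat, cint p`_k.

Definition partial_sum (c : nat -> C) (n : nat) : C -> C :=
  fun z => \sum_(k < n.+1) c k * z ^+ k.

End Defs.

(* Main.v *)
Require Import Defs.
From HB Require Import structures.
From mathcomp Require Import all_boot all_order all_algebra.
From mathcomp Require Import complex.
From mathcomp Require Import all_classical all_reals all_analysis.
From mathcomp Require Import ring lra.
Import Order.TTheory GRing.Theory Num.Theory.
Import numFieldNormedType.Exports.
Local Open Scope ring_scope.
Local Open Scope complex_scope.
Local Open Scope classical_set_scope.
Local Set Implicit Arguments.
Lemma entire_horner (R : realType) (p : {poly R[i]}) : entire (fun z => p.[z]).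
Proof.
move=> x.
elim/poly_ind: p => [|p r ih].
  have -> : (fun z : R[i] => (0 : {poly R[i]}).[z]) = cst 0.
    by apply/funext => y; rewrite horner0.
    exact: (@derivable_cst R[i] R[i]^o R[i]^o).
have E : (fun z : R[i] => (p * 'X + r%:P).[z]) = (fun z => p.[z] * z + r).
  by apply/funext => y; rewrite !hornerE.
rewrite E.
have H1 := (@derivableD R[i] R[i]^o R[i]^o (fun z => p.[z] * z) (cst r) x 1).
have H2 := (@derivableM R[i] R[i]^o (fun z => p.[z]) id x 1 ih (@derivable_id R[i] R[i]^o x 1)).
have H3 := (@derivable_cst R[i] R[i]^o R[i]^o r x 1).
exact: (H1 H2 H3).
Qed.

Section S.
Variable R : realType.

Lemma cvg0_ev (u : nat -> R) : u @ \oo --> (0:R) ->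
  forall e, 0 < e -> exists M, forall n, (M <= n)%N -> `|u n| < e.
Proof.
move=> /cvgrPdist_lt H e he; have [M _ HM] := H e he.
by exists M => n Hn; have := HM n Hn; rewrite sub0r normrN.
Qed.

Lemma ev_cvg0 (u : nat -> R) :
  (forall e, 0 < e -> exists M, forall n, (M <= n)%N -> `|u n| < e) -> u @ \oo --> (0:R).
Proof.
move=> H; apply/cvgrPdist_lt => e he; have [M HM] := H e he.
by exists M => // n Hn; rewrite sub0r normrN; apply: HM.
Qed.

Lemma expiD (a b : R) : expi (a + b) = expi a * expi b.
Proof. by rewrite /expi cosD sinD /=; congr (_ +i* _); rewrite ?addr0 ?subr0; ring. Qed.

Lemma expi0 : expi (0:R) = 1.
Proof. by rewrite /expi cos0 sin0. Qed.

Lemma expi_nat (t : R) n : expi (n%:R * t) = expi t ^+ n.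
Proof.
elim: n => [|n IH]; first by rewrite mul0r expi0.
by rewrite exprS -IH mulrSr mulrDl mul1r addrC expiD.
Qed.

Lemma expi2pi : expi (two_pi : R) = 1.
Proof. by rewrite /expi /two_pi cos2pi sin2pi. Qed.

Lemma expiNK (t : R) : expi t * expi (- t) = 1.
Proof. by rewrite -expiD subrr expi0. Qed.

Lemma expi_neq1 (x : R) : 0 < x < two_pi -> expi x != 1.
Proof.
case/andP => x0 x2; apply/negP => /eqP E.
have c1 : cos x = 1 by move: E; rewrite /expi => -[].
have h : x = x / 2 + x / 2 by rewrite -splitr.
have : cos x = 1 - (sin (x/2)) ^+ 2 *+ 2.
  by rewrite {1}h cosD -!expr2 cos2sin2; ring.
rewrite c1 => /eqP; rewrite eq_sym subr_eq addrC -subr_eq subrr eq_sym.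
rewrite mulrn_eq0 /= expf_eq0 /=; apply/negP; rewrite gt_eqF //.
apply: sin_gt0_pi; rewrite divr_gt0 //=.
by rewrite ltr_pdivrMr // mulr_natr.
Qed.

Lemma normc_expi (t : R) : `|expi t| = 1.
Proof. by rewrite normc_def /= cos2sin2 subrK sqrtr1. Qed.

Lemma cabs_normC (z : R[i]) : `|z| = 1 -> cabs z = 1.
Proof. by rewrite /cabs => ->. Qed.

Lemma int_small (x : R) : x \is a Num.int -> `|x| < 1 -> x = 0.
Proof.
move=> xi x1; apply/eqP; apply: contraTT x1 => x0.
by rewrite -leNgt norm_intr_ge1.
Qed.

Lemma int_limit (r : R) (x : nat -> R) : (forall n, x n \is a Num.int) ->
  (forall e, 0 < e -> exists M, forall n, (M <= n)%N -> `|r - x n| < e) ->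
  r \is a Num.int.
Proof.
move=> xi H.
have h2 : (0:R) < 1/2 by lra.
have [M HM] := H (1/2) h2.
suff -> : r = x M by [].
apply/eqP; rewrite -subr_eq0 -normr_eq0; apply/negPn/negP => ne.
have gt : 0 < `|r - x M| by rewrite lt_def ne normr_ge0.
have [M' HM'] := H `|r - x M| gt.
pose n := maxn M M'.
have a := HM n (leq_maxl _ _).
have b := HM' n (leq_maxr _ _).
have c := HM M (leqnn M).
have e : x n - x M = 0.
  apply: int_small; first by rewrite rpredB.
  have -> : x n - x M = (r - x M) - (r - x n) by ring.
  apply: (le_lt_trans (ler_normB _ _)); lra.
have xe : x n = x M by apply/eqP; rewrite -subr_eq0 e.
by move: b; rewrite xe ltxx.
Qed.

Local Notation C := R[i].

Lemma cabs_ge0 (z : C) : 0 <= cabs z.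
Proof. by rewrite /cabs normc_def /= sqrtr_ge0. Qed.

Lemma cabs0 : cabs (0:C) = 0.
Proof. by rewrite /cabs normr0. Qed.

Lemma cabsN1 : cabs (-1 : C) = 1.
Proof. by rewrite /cabs normrN1. Qed.

Lemma cabs_natM (m : nat) (y : C) : cabs (m%:R * y) = m%:R * cabs y.
Proof. by rewrite /cabs normrM normr_nat mulr_natl normc_def -rmorphMn /= mul0r subr0 mulr_natl. Qed.

Lemma Re_le_cabs (z : C) : `|complex.Re z| <= cabs z.
Proof. by rewrite /cabs normc_def /= -sqrtr_sqr ler_sqrt ?addr_ge0 ?sqr_ge0 // lerDl sqr_ge0. Qed.

Lemma Im_le_cabs (z : C) : `|complex.Im z| <= cabs z.
Proof. by rewrite /cabs normc_def /= -sqrtr_sqr ler_sqrt ?addr_ge0 ?sqr_ge0 // lerDr sqr_ge0. Qed.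

Variables (Xs : set (C -> C)) (N : (C -> C) -> R).
Hypothesis A : admissible_space Xs N.

Lemma Xs_poly (q : {poly C}) : Xs (fun z => q.[z]).
Proof. apply: (adm_entire A); exact: entire_horner. Qed.

Lemma N_zero : N (fun _ => 0) = 0.
Proof.
have -> : (fun _ : C => (0:C)) = (fun z => 0 * (fun _ => (0:C)) z).
  by apply/funext => z; rewrite mul0r.
by rewrite (adm_normZ A _ (adm_zero A)) cabs0 mul0r.
Qed.

Lemma N_sum n (a : nat -> C) (g : nat -> C -> C) : (forall j, Xs (g j)) ->
  Xs (fun z => \sum_(j < n) a j * g j z) /\
  N (fun z => \sum_(j < n) a j * g j z) <= \sum_(j < n) cabs (a j) * N (g j).
Proof.
move=> Xg; elim: n => [|n [IH1 IH2]].
  have -> : (fun z => \sum_(j < 0) a j * g j z) = (fun _ => 0).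
    by apply/funext => z; rewrite big_ord0.
  by rewrite N_zero big_ord0; split; [exact: (adm_zero A)|].
have -> : (fun z => \sum_(j < n.+1) a j * g j z) =
   (fun z => (fun z => \sum_(j < n) a j * g j z) z + (fun z => a n * g n z) z).
  by apply/funext => z; rewrite big_ord_recr.
have Xa : Xs (fun z => a n * g n z) by apply: (adm_scale A).
split; first by apply: (adm_add A).
apply: (le_trans (adm_normD A IH1 Xa)).
by rewrite big_ord_recr /= (adm_normZ A _ (Xg n)) lerD2r.
Qed.

Lemma N_sub (g h : C -> C) : Xs g -> Xs h ->
  Xs (fun z => g z - h z) /\ N (fun z => g z - h z) <= N g + N h.
Proof.
move=> Xg Xh.
have Xh' : Xs (fun z => -1 * h z) by apply: (adm_scale A).
have -> : (fun z => g z - h z) = (fun z => g z + (fun z => -1 * h z) z).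
  by apply/funext => z; rewrite mulN1r.
split; first by apply: (adm_add A).
by apply: (le_trans (adm_normD A Xg Xh')); rewrite (adm_normZ A _ Xh) cabsN1 mul1r.
Qed.


Lemma Xs_pow k : Xs (fun z => z ^+ k).
Proof.
have -> : (fun z : C => z ^+ k) = (fun z => ('X^k : {poly C}).[z]).
  by apply/funext => z; rewrite hornerXn.
exact: Xs_poly.
Qed.

Lemma geo_sum (u : C) m : u ^+ m = 1 -> u != 1 -> \sum_(j < m) u ^+ j = 0.
Proof.
move=> um u1; have := subrX1 u m; rewrite um subrr => /esym /eqP.
by rewrite mulf_eq0 subr_eq0 (negbTE u1) /= => /eqP.
Qed.

Section Roots.
Variable m : nat.
Hypothesis m0 : (0 < m)%N.
Let th : R := two_pi / m%:R.
Let w : C := expi th.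
Let v : C := expi (- th).

Lemma two_pi_gt0 : (0:R) < two_pi.
Proof. by rewrite /two_pi pmulrn_lgt0 // pi_gt0. Qed.

Lemma wv : w * v = 1.
Proof. exact: expiNK. Qed.

Lemma wm : w ^+ m = 1.
Proof.
rewrite /w -expi_nat /th mulrC divfK ?expi2pi //.
by rewrite pnatr_eq0 -lt0n.
Qed.

Lemma vm : v ^+ m = 1.
Proof. by have := expr1n C m; rewrite -wv exprMn wm mul1r. Qed.

Lemma wd d : (0 < d < m)%N -> w ^+ d != 1.
Proof.
case/andP => d0 dm; rewrite /w -expi_nat; apply: expi_neq1.
have m0' : (0:R) < m%:R by rewrite ltr0n.
have tp := two_pi_gt0.
apply/andP; split.
  by rewrite /th mulr_gt0 ?ltr0n // divr_gt0.
rewrite /th mulrCA gtr_pMr // ltr_pdivrMr // mul1r ltr_nat //.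
Qed.

Lemma rootsum k l : (k < m)%N -> (l < m)%N ->
  \sum_(j < m) (v ^+ k * w ^+ l) ^+ j = if l == k then m%:R else 0.
Proof.
move=> km lm; case: eqP => [->|lk].
  rewrite -exprMn mulrC wv expr1n.
  under eq_bigr do rewrite expr1n.
  by rewrite sumr_const card_ord.
apply: geo_sum.
  by rewrite exprMn -!exprM mulnC exprM vm mulnC exprM wm !expr1n mulr1.
case: (ltngtP l k) => [lk'|kl|e]; last by case: lk.
- have -> : v ^+ k * w ^+ l = v ^+ (k - l).
    rewrite -{1}(subnK (ltnW lk')) exprD -mulrA -exprMn (mulrC v w) wv expr1n mulr1 //.
  apply/negP => /eqP E.
  have kl0 : (0 < k - l < m)%N by rewrite subn_gt0 lk' (leq_ltn_trans (leq_subr _ _) km).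
  move/negP: (@wd _ kl0); apply.
  have : (w * v) ^+ (k - l) = 1 by rewrite wv expr1n.
  by rewrite exprMn E mulr1 => ->.
- have -> : v ^+ k * w ^+ l = w ^+ (l - k).
    by rewrite -{1}(subnK (ltnW kl)) exprD mulrCA -exprMn (mulrC v w) wv expr1n mulr1.
  apply: wd; rewrite subn_gt0 kl /=.
  exact: leq_ltn_trans (leq_subr _ _) lm.
Qed.

Lemma coef_bound (q : {poly C}) k : (size q <= m)%N -> (k < m)%N ->
  cabs q`_k * N (fun z => z ^+ k) <= N (fun z => q.[z]).
Proof.
move=> sq km.
pose g j := fun z => (fun z => q.[z]) (z * expi (j%:R * th)).
pose a j := (v ^+ k) ^+ j.
have Xg j : Xs (g j) by exact: (adm_rot A _ (Xs_poly q)).1.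
have Ng j : N (g j) = N (fun z => q.[z]) by exact: (adm_rot A _ (Xs_poly q)).2.
have ca j : cabs (a j) = 1.
  by apply: cabs_normC; rewrite /a normrX normrX normc_expi !expr1n.
have [_ Hle] := N_sum m a g Xg.
have E : (fun z => \sum_(j < m) a j * g j z) = (fun z => (m%:R * q`_k) * (fun z => z ^+ k) z).
  apply/funext => z.
  rewrite /g /a.
  under eq_bigr do rewrite expi_nat (horner_coef_wide _ sq) mulr_sumr.
  rewrite exchange_big /=.
  have -> : \sum_(l < m) \sum_(j < m) (v ^+ k) ^+ j * (q`_l * (z * expi th ^+ j) ^+ l)
     = \sum_(l < m) q`_l * z ^+ l * \sum_(j < m) (v ^+ k * w ^+ l) ^+ j.
    apply: eq_bigr => l _; rewrite mulr_sumr; apply: eq_bigr => j _.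
    rewrite [in RHS]exprMn [in LHS]exprMn /w [(expi th ^+ j) ^+ l]exprAC.
    rewrite mulrCA -mulrA; congr (_ * _); exact: mulrCA.
  under eq_bigr => l _ do rewrite rootsum //.
  rewrite (bigD1 (Ordinal km)) //= eqxx big1 ?addr0; first by ring.
  move=> l; rewrite -val_eqE /= => /negbTE ->; exact: mulr0.
rewrite E (adm_normZ A _ (Xs_pow k)) cabs_natM in Hle.
have Es : \sum_(j < m) cabs (a j) * N (g j) = m%:R * N (fun z => q.[z]).
  by under eq_bigr do rewrite ca Ng mul1r; rewrite sumr_const card_ord mulr_natl.
rewrite Es in Hle.
have mpos : (0:R) < m%:R by rewrite ltr0n.
by rewrite -(ler_pM2l mpos) mulrA.
Qed.

End Roots.


Lemma Npow_gt0 k : 0 < N (fun z => z ^+ k).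
Proof.
have ge := adm_norm_ge0 A (Xs_pow k).
rewrite lt_def ge andbT; apply/negP => /eqP E.
have h : unit_disk (2^-1 : C).
  rewrite /unit_disk /= ger0_norm ?invr_ge0 ?ler0n // invf_lt1 ?ltr0n //.
  by rewrite ltr1n.
have := adm_norm_eq0 A (Xs_pow k) E h.
by move/eqP; rewrite expf_eq0 invr_eq0 pnatr_eq0 andbF.
Qed.

Lemma ReB (a b : C) : complex.Re (a - b) = complex.Re a - complex.Re b.
Proof. by case: a => a1 a2; case: b. Qed.

Lemma ImB (a b : C) : complex.Im (a - b) = complex.Im a - complex.Im b.
Proof. by case: a => a1 a2; case: b. Qed.

Lemma lim_cint (c0 : C) (x : nat -> C) : (forall n, cint (x n)) ->
  (forall e, 0 < e -> exists M, forall n, (M <= n)%N -> cabs (c0 - x n) < e) -> cint c0.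
Proof.
move=> xi H; split.
  apply: (@int_limit _ (fun n => complex.Re (x n))); first by move=> n; case: (xi n).
  move=> e he; have [M HM] := H e he; exists M => n Hn.
  by rewrite -ReB; apply: le_lt_trans (Re_le_cabs _) (HM n Hn).
apply: (@int_limit _ (fun n => complex.Im (x n))); first by move=> n; case: (xi n).
move=> e he; have [M HM] := H e he; exists M => n Hn.
by rewrite -ImB; apply: le_lt_trans (Im_le_cabs _) (HM n Hn).
Qed.

End S.

Unset Implicit Arguments.

Theorem theorem5p3 (R : realType) (Xs : set (R[i] -> R[i])) (N : (R[i] -> R[i]) -> R)
  (f : R[i] -> R[i]) (c : nat -> R[i]) :
  admissible_space Xs N ->
  Xs f ->
  (forall z, unit_disk z -> (fun n => partial_sum c n z : R[i]^o) @ \oo --> (f z : R[i]^o)) ->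
  (fun n => N (fun z => f z - partial_sum c n z)) @ \oo --> (0 : R) ->
  ((exists p : nat -> {poly R[i]}, (forall n, PnZ n (p n)) /\
      (fun n => N (fun z => f z - (p n).[z])) @ \oo --> (0 : R))
   <-> (forall k, cint (c k))).
Proof.
move=> A Xf Hpt HS; split.
- case=> p [Pp Hp] k.
  have K0 := Npow_gt0 A k.
  apply: (@lim_cint R (c k) (fun n => (p n)`_k)).
    by move=> n; case: (Pp n).
  move=> e he.
  have eK : 0 < e * N (fun z => z ^+ k) / 2 by rewrite divr_gt0 // mulr_gt0.
  have [M1 H1] := cvg0_ev Hp _ eK.
  have [M2 H2] := cvg0_ev HS _ eK.
  exists (maxn k (maxn M1 M2)) => n; rewrite !geq_max => /and3P [Hk Hn1 Hn2].
  have Xp := Xs_poly A (p n).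
  pose S := \poly_(i < n.+1) c i.
  have XS := Xs_poly A S.
  have ES : (fun z => f z - partial_sum c n z) = (fun z => f z - S.[z]).
    by apply/funext => z; rewrite horner_poly.
  have [Xa Na] := N_sub A _ _ Xf Xp.
  have [Xb Nb] := N_sub A _ _ Xf XS.
  have Nd := (N_sub A _ _ Xa Xb).2.
  have EQ : (fun z => (fun z => f z - (p n).[z]) z - (fun z => f z - S.[z]) z)
      = (fun z => (S - p n).[z]).
    by apply/funext => z; rewrite hornerD hornerN /= opprB addrC addrA subrK.
  rewrite EQ in Nd.
  have m0 : (0 < maxn (size (S - p n)%R) k.+1)%N by rewrite leq_max orbT.
  have cb := coef_bound A _ m0 _ _ (leq_maxl _ _) (leq_maxr _ _).
  rewrite coefB coef_poly ltnS Hk in cb.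
  have a1 := H1 n Hn1.
  have a2 := H2 n Hn2.
  rewrite ES in a2.
  have b1 := le_lt_trans (ler_norm _) a1.
  have b2 := le_lt_trans (ler_norm _) a2.
  rewrite -(ltr_pM2r K0).
  apply: (le_lt_trans cb); apply: (le_lt_trans Nd).
  lra.
- move=> Hc; exists (fun n => \poly_(i < n) c i); split.
    move=> n; split; first exact: size_poly.
    move=> j; rewrite coef_poly; case: ifP => _; first exact: Hc.
    by split; rewrite /= rpred0.
  apply: ev_cvg0 => e he; have [M HM] := cvg0_ev HS _ he.
  exists M.+1 => -[|n] // Hn.
  have -> : (fun z => f z - (\poly_(i < n.+1) c i).[z]) = (fun z => f z - partial_sum c n z).
    by apply/funext => z; rewrite horner_poly.
  exact: HM.
Qed.
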